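(* Let $G$ be a cubic bipartite graph with $2k$ vertices and a proper 3-edge-coloring. Then the number of faces of the faithful embedding of $G$ relative to the 3-coloring has the same parity as $k$. Consequently, if $M$ is an orientable map, then $\chi(M)$ is even.
   Context: A proper 3-edge-coloring (colors $a,b,c$) of a cubic graph gives the $ab$-, $bc$-, $ca$-polygons (cycles of edges of two colors); the faithful embedding is obtained by attaching a disc along each such polygon, so its faces correspond to these polygons. A map is a triple $M=(C_M,v_M,f_M)$ where $C_M$ is a finite cubic graph and $v_M,f_M$ are disjoint perfect matchings whose union is a disjoint union of 4-cycles (squares, set $SQ(M)$); $a_M$ is the third perfect matching; $\chi(M)=|vG(M)|-|SQ(M)|+|fG(M)|$ where $vG(M)$, $fG(M)$ are the sets of cycles of $v_M\cup a_M$ and $f_M\cup a_M$. $M$ is orientable if $C_M$ is bipartite. *)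

(* Defs.v *)
From mathcomp Require Import all_boot all_order all_algebra.
Set Implicit Arguments. Unset Strict Implicit. Unset Printing Implicit Defensive.

(* A perfect matching of a (loopless, possibly multi-) graph on the vertex
   set V is encoded by the fixed-point-free involution x |-> partner of x. *)
Definition perfect_matching (V : finType) (s : V -> V) : Prop :=
  involutive s /\ forall x, s x != x.

(* A cubic graph with a proper 3-edge-coloring (colors a, b, c) on vertex set V:
   every vertex has exactly one edge of each color, so the graph is the
   union of three perfect matchings a, b, c (color classes). *)
Definition cubic_3colored (V : finType) (a b c : V -> V) : Prop :=
  [/\ perfect_matching a, perfect_matching b & perfect_matching c].

Definition bipartite3 (V : finType) (a b c : V -> V) : Prop :=
  exists side : V -> bool,
    forall x, [/\ side (a x) != side x, side (b x) != side x & side (c x) != side x].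

Definition two_color_rel (V : finType) (s t : V -> V) : rel V :=
  fun x y => (y == s x) || (y == t x).

Definition polygons (V : finType) (s t : V -> V) : nat :=
  n_comp (two_color_rel s t) V.

(* Number of faces of the faithful embedding: one disc per ab-, bc-, ca-polygon. *)
Definition faithful_faces (V : finType) (a b c : V -> V) : nat :=
  polygons a b + polygons b c + polygons c a.

(* A map M = (C_M, v_M, f_M): C_M cubic, v_M, f_M disjoint perfect matchings
   whose union is a disjoint union of 4-cycles, a_M the third perfect matching
   (the remaining edges).  Here C_M is given by the three matchings v, f, a. *)
Definition is_map (V : finType) (v f a : V -> V) : Prop :=
  cubic_3colored v f a /\
  forall x : V, #|[set y | connect (two_color_rel v f) x y]| = 4.

(* chi(M) = |vG(M)| - |SQ(M)| + |fG(M)|. *)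
Definition euler_char (V : finType) (v f a : V -> V) : int :=
  (polygons v a)%:Z - (polygons v f)%:Z + (polygons f a)%:Z.

(* M is orientable iff C_M is bipartite. *)
Definition orientable_map (V : finType) (v f a : V -> V) : Prop :=
  bipartite3 v f a.

(* Main.v *)
Require Import Defs.
From mathcomp Require Import all_boot all_order all_algebra all_fingroup zify.
Set Implicit Arguments. Unset Strict Implicit.

Lemma porbit_fconnect (T : finType) (p : {perm T}) x :
  porbit p x = [set y | fconnect p x y].
Proof.
apply/setP=> y; rewrite inE; apply/porbitP/idP.
  by move=> [i ->]; rewrite permX; apply: fconnect_iter.
by move=> H; exists (findex p x y); rewrite permX iter_findex.
Qed.

Lemma ncomp_porbits (T : finType) (p : {perm T}) :
  n_comp (frel p) T = #|porbits p|.
Proof.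
have sym := fconnect_sym (@perm_inj _ p).
pose R := [set x | roots (frel p) x].
have -> : porbits p = porbit p @: R.
  apply/setP=> Y; apply/imsetP/imsetP=> [[x _ ->]|[x _ ->]]; last by exists x.
  exists (froot p x); first by rewrite inE roots_root.
  rewrite !porbit_fconnect; apply/setP=> y; rewrite !inE.
  by rewrite (same_connect sym (connect_root (frel p) x)).
rewrite card_in_imset.
  by apply: eq_card => x; rewrite !inE andbT.
move=> x y; rewrite !inE => /eqP rx /eqP ry E.
have : y \in porbit p x by rewrite E porbit_id.
rewrite porbit_fconnect inE => /(fingraph.rootP sym).
by rewrite rx ry.
Qed.

Section Bip.
Variables (V : finType) (s t : V -> V) (side : V -> bool).
Hypotheses (invs : involutive s) (invt : involutive t).
Hypotheses (ss : forall x, side (s x) != side x) (st : forall x, side (t x) != side x).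

Lemma side_s x : side (s x) = ~~ side x.
Proof. by move: (ss x); case: (side (s x)); case: (side x). Qed.
Lemma side_t x : side (t x) = ~~ side x.
Proof. by move: (st x); case: (side (t x)); case: (side x). Qed.

Local Notation W := {x : V | side x}.

Lemma tsP (x : W) : side (t (s (val x))).
Proof. by rewrite side_t side_s negbK (valP x). Qed.

Definition tsf (x : W) : W := exist (fun y => side y) _ (tsP x).

Lemma tsf_inj : injective tsf.
Proof.
move=> x y /(congr1 val) /= E; apply: val_inj.
by rewrite -(invs (val x)) -(invt (s (val x))) E invt invs.
Qed.

Definition tsp : {perm W} := perm tsf_inj.

Lemma gP x : side (if side x then x else s x).
Proof. by case: ifP => // /negbT; rewrite side_s. Qed.

Definition g x : W := exist (fun y => side y) _ (gP x).

Lemma sym_e : connect_sym (two_color_rel s t).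
Proof.
apply: sym_connect_sym => x y; rewrite /two_color_rel.
by apply/orP/orP; case=> /eqP->; rewrite ?invs ?invt eqxx; auto.
Qed.

Lemma polygons_porbits : polygons s t = #|porbits tsp|.
Proof.
have syme' := fconnect_sym (@perm_inj _ tsp).
have cl : closed (two_color_rel s t) V by [].
have adj : rel_adjunction val (two_color_rel s t) (frel tsp) V.
  apply: (@intro_adjunction _ _ val _ _ syme' V cl (fun x _ => g x)).
  - move=> x _; split.
      rewrite /=; case: ifP => _; first exact: connect0.
      by apply: connect1; rewrite /two_color_rel eqxx.
    move=> y _; rewrite /two_color_rel => /orP[]/eqP->.
      have -> : g (s x) = g x.
        by apply: val_inj => /=; rewrite side_s; case: (side x) => //=; rewrite invs.
      exact: connect0.
    case sx: (side x).
      (* g x = x, g (t x) = s (t x); tsp (g (t x)) = x *)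
      rewrite syme'; apply: connect1; apply/eqP; apply: val_inj.
      by rewrite /= permE /= side_t sx /= invs invt.
    apply: connect1; apply/eqP; apply: val_inj.
    by rewrite /= permE /= side_t sx /= ?invs.
  - move=> x' _; split.
      have -> : g (val x') = x'.
        by apply: val_inj => /=; rewrite (valP x').
      exact: connect0.
    move=> y' /eqP <-; rewrite permE /=.
    have h1 : two_color_rel s t (val x') (s (val x')) by rewrite /two_color_rel eqxx.
    have h2 : two_color_rel s t (s (val x')) (t (s (val x'))).
      by rewrite /two_color_rel eqxx orbT.
    exact: connect_trans (connect1 h1) (connect1 h2).
rewrite /polygons (adjunction_n_comp val sym_e syme' cl adj).
rewrite -ncomp_porbits; apply: eq_n_comp_r => x; by rewrite !inE.
Qed.

End Bip.

Lemma cardW (V : finType) (s : V -> V) (side : V -> bool) :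
  involutive s -> (forall x, side (s x) != side x) ->
  #|V| = 2 * #|{: {x : V | side x}}|.
Proof.
move=> invs ss.
have sd x : side (s x) = ~~ side x by move: (ss x); case: (side (s x)); case: (side x).
rewrite card_sig -(cardC [pred x | side x]).
have -> : #|[predC [pred x | side x]]| = #|[set x | side x]|.
  rewrite -(card_imset _ (inv_inj invs)); apply: eq_card => x.
  rewrite !inE; apply/idP/imsetP.
    move=> nx; apply: (@ex_intro2 _ _ _ (s x)); [by rewrite inE sd | by rewrite invs].
  by move=> [y]; rewrite inE => sy ->; rewrite sd sy.
rewrite cardsE mul2n -addnn; congr (_ + _); exact: eq_card.
Qed.

Lemma comp4 (V : finType) (e : rel V) : connect_sym e ->
  (forall x, #|[set y | connect e x y]| = 4) -> #|V| = 4 * n_comp e V.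
Proof.
move=> sym H.
rewrite -sum1_card (partition_big (fingraph.root e) (roots e)); last by move=> i _; exact: roots_root.
rewrite (eq_bigr (fun _ => 4)).
  rewrite sum_nat_const mulnC; congr (_ * _); apply: eq_card => x; by rewrite !inE andbT.
move=> r /eqP rr; rewrite sum1_card -(H r); apply: eq_card => y; rewrite !inE.
rewrite unfold_in /=; apply/idP/idP.
  by move=> /eqP ry; apply/(fingraph.rootP sym); rewrite ry rr.
by move=> /(fingraph.rootP sym) ry; apply/eqP; rewrite -ry rr.
Qed.

Lemma part1 (V : finType) (a b c : V -> V) (k : nat) :
      cubic_3colored a b c -> bipartite3 a b c -> #|V| = (2 * k)%N ->
      odd (faithful_faces a b c) = odd k.
Proof.
move=> [[ia na] [ib nb] [ic nc]] [side Hs] Hk.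
have sa x : side (a x) != side x by case: (Hs x).
have sb x : side (b x) != side x by case: (Hs x).
have sc x : side (c x) != side x by case: (Hs x).
have kW : k = #|{: {x : V | side x}}|.
  by move: Hk; rewrite (cardW ia sa); lia.
rewrite /faithful_faces (polygons_porbits ia ib sa sb) (polygons_porbits ib ic sb sc)
   (polygons_porbits ic ia sc sa).
set p := @tsp _ _ _ _ _ _ _ _.
set q := @tsp _ _ _ _ _ _ _ _.
set r := @tsp _ _ _ _ _ _ _ _.
have E : (p * q * r = 1)%g.
  apply/permP => x; apply: val_inj.
  by rewrite !permM /p /q /r /tsp !permE /= ic ib ia.
have := odd_perm1 {x : V | side x}; rewrite -E !odd_permM /odd_perm -kW !oddD.
by case: (odd k); case: (odd #|porbits p|); case: (odd #|porbits q|); case: (odd #|porbits r|).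
Qed.

Lemma part2 (V : finType) (v f a : V -> V) :
      is_map v f a -> orientable_map v f a ->
      (2 %| euler_char v f a)%Z.
Proof.
move=> [C H4] Bi.
have [[iv nv] [if_ nf] _] := C.
have symvf : connect_sym (two_color_rel v f).
  apply: sym_connect_sym => x y; rewrite /two_color_rel.
  by apply/orP/orP; case=> /eqP->; rewrite ?iv ?if_ eqxx; auto.
have HV := comp4 symvf H4.
have HP := @part1 _ v f a (2 * polygons v f) C Bi (ltac:(rewrite HV /polygons; lia)).
have Eva : polygons v a = polygons a v.
  apply: eq_n_comp => x y; apply: eq_connect => u w; by rewrite /two_color_rel orbC.
move: HP; rewrite /faithful_faces /euler_char Eva.
set A := polygons v f; set B := polygons f a; set C' := polygons a v.
rewrite oddM /= => HP.
have := odd_double_half (A + B + C'); rewrite HP add0n => ES.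
have -> : (Posz C' - Posz A + Posz B = 2 * (Posz (A + B + C')./2 - Posz A))%R.
  have : Posz (A + B + C') = Posz ((A + B + C')./2.*2) by rewrite ES.
  lia.
by apply: dvdz_mulr.
Qed.

Theorem theorem1p7 :
  (forall (V : finType) (a b c : V -> V) (k : nat),
      cubic_3colored a b c -> bipartite3 a b c -> #|V| = (2 * k)%N ->
      odd (faithful_faces a b c) = odd k)
  /\
  (forall (V : finType) (v f a : V -> V),
      is_map v f a -> orientable_map v f a ->
      (2 %| euler_char v f a)%Z).
Proof. split; [exact: part1 | exact: part2]. Qed.
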